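(* Let $A=\mathbb{S}\mathbb{O}$, $f\in\mathcal{S}(\Omega)$ and $x\in\Omega$. Then one of the following possibilities applies: (1) $V(f)\cap\mathbb{S}_x=\emptyset$; (2) $V(f)\cap\mathbb{S}_x=\{y\}$, $f'_s(x)\in C_A^*=\mathbb{S}\mathbb{O}\setminus n^{-1}(0)$ and $y=\mathrm{re}(x)-f^\circ_s(x)f'_s(x)^{-1}$; (3) $V(f)\cap\mathbb{S}_x$ is an affine $2$-plane in $\mathbb{S}\mathbb{O}\simeq\mathbb{R}^8$ and $f'_s(x)$ is a zero divisor (i.e., it is a nonzero element of $n^{-1}(0)$); (4) $V(f)\supseteq\mathbb{S}_x$ and $f'_s(x)=0$. In each of these cases, respectively: (1) either $V(N(f))\cap\mathbb{S}_x=\emptyset=V(f^c)\cap\mathbb{S}_x$; or $V(N(f))\supseteq\mathbb{S}_x$ and $V(f^c)\cap\mathbb{S}_x$ is either empty or $2$-dimensional; (2) $V(N(f))\supseteq\mathbb{S}_x$ and $V(f^c)\cap\mathbb{S}_x=\{f'_s(x)^{-1}y^cf'_s(x)\}$; (3) $V(N(f))\supseteq\mathbb{S}_x$ and $V(f^c)\cap\mathbb{S}_x$ is either empty or $2$-dimensional; (4) $\mathbb{S}_x$ is included both in $V(f^c)$ and in $V(N(f))$.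
   Context: $\mathbb{S}\mathbb{O}$ (split-octonions) is the real algebra $\mathbb{H}+l\mathbb{H}$ ($\mathbb{H}$ the quaternions) with product determined by $(lp)(lq)=qp^c$, $p(lq)=l(p^cq)$, $(lp)q=l(qp)$ for $p,q\in\mathbb{H}$ ($p^c$ the quaternionic conjugate), and $^*$-involution $(p+lq)^c=p^c-lq$; it is an alternative $^*$-algebra with norm $n(x)=xx^c$, $n(p+lq)=n(p)-n(q)$. For a real finite-dimensional unital alternative $^*$-algebra $A$: $t(x)=x+x^c$; center $=\{r:(r,a,b)=0,\ ra=ar\ \forall a,b\}$; $C_A=\{0\}\cup\{a:n(a),n(a^c)$ invertible elements of the center$\}$, $C_A^*=C_A\setminus\{0\}$. $\mathbb{S}_A=\{J:t(J)=0,n(J)=1\}$, $Q_A=\mathbb{R}\cup\{x:t(x),n(x)\in\mathbb{R},4n(x)>t(x)^2\}$; every $x\in Q_A$ is $\alpha+\beta J$ ($\alpha,\beta\in\mathbb{R}$, $J\in\mathbb{S}_A$), $x^c=\alpha-\beta J$, $\mathrm{re}(x)=t(x)/2$, $\mathrm{im}(x)=x-\mathrm{re}(x)$, $\mathbb{S}_x=\{\alpha+\beta I:I\in\mathbb{S}_A\}$. Let $D\subseteq\mathbb{C}$ be non-empty, invariant under conjugation, $\Omega=\{\alpha+\beta J:\alpha+i\beta\in D,J\in\mathbb{S}_A\}$. $A_{\mathbb{C}}=\{a+\imath b\}$ with $(a+\imath b)(a'+\imath b')=aa'-bb'+\imath(ab'+ba')$, $\overline{a+\imath b}=a-\imath b$,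 $(a+\imath b)^c=a^c+\imath b^c$. A stem function $F=F_1+\imath F_2:D\to A_{\mathbb{C}}$ satisfies $F(\bar z)=\overline{F(z)}$ and induces the slice function $f=\mathcal{I}(F)$, $f(\alpha+\beta J)=F_1(\alpha+i\beta)+JF_2(\alpha+i\beta)$; $\mathcal{S}(\Omega)$ is the set of these. $f\cdot g=\mathcal{I}(FG)$, $f^c=\mathcal{I}(F^c)$ with $F^c(z)=F(z)^c$, $N(f)=f\cdot f^c$. $V(h)=\{x:h(x)=0\}$. $f^\circ_s(x)=\frac12(f(x)+f(x^c))$, $f'_s(x)=\frac12\mathrm{im}(x)^{-1}(f(x)-f(x^c))$ for $x\notin\mathbb{R}$ (and $f'_s(x):=0$ is not defined for real $x$; for real $x$ only cases (1),(4)-type statements about $\{x\}=\mathbb{S}_x$ are meaningful). *)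

(* Defs.v *)
From HB Require Import structures.
From mathcomp Require Import all_boot all_order all_algebra.
From mathcomp Require Import boolp classical_sets reals.
Set Implicit Arguments. Unset Strict Implicit. Unset Printing Implicit Defensive.
Import Order.TTheory GRing.Theory Num.Theory.
Local Open Scope ring_scope.
Local Open Scope classical_set_scope.

Section SplitOctonions.
Variable R : realType.

Record quat := Quat { q0 : R; q1 : R; q2 : R; q3 : R }.

Definition qzero := Quat 0 0 0 0.
Definition qadd (p q : quat) :=
  Quat (q0 p + q0 q) (q1 p + q1 q) (q2 p + q2 q) (q3 p + q3 q).
Definition qopp (p : quat) := Quat (- q0 p) (- q1 p) (- q2 p) (- q3 p).
Definition qscale (r : R) (p : quat) :=
  Quat (r * q0 p) (r * q1 p) (r * q2 p) (r * q3 p).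
(* Hamilton product, i^2 = j^2 = k^2 = ijk = -1 *)
Definition qmul (p q : quat) :=
  Quat (q0 p * q0 q - q1 p * q1 q - q2 p * q2 q - q3 p * q3 q)
       (q0 p * q1 q + q1 p * q0 q + q2 p * q3 q - q3 p * q2 q)
       (q0 p * q2 q - q1 p * q3 q + q2 p * q0 q + q3 p * q1 q)
       (q0 p * q3 q + q1 p * q2 q - q2 p * q1 q + q3 p * q0 q).
Definition qconj (p : quat) := Quat (q0 p) (- q1 p) (- q2 p) (- q3 p).

(** Split-octonions SO = H + lH; [SO p q] stands for p + l q. *)
Record so := SO { sp : quat; sq : quat }.

Definition sozero := SO qzero qzero.
Definition soreal (r : R) := SO (Quat r 0 0 0) qzero.
Definition soadd (x y : so) := SO (qadd (sp x) (sp y)) (qadd (sq x) (sq y)).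
Definition soopp (x : so) := SO (qopp (sp x)) (qopp (sq x)).
Definition sosub (x y : so) := soadd x (soopp y).
Definition soscale (r : R) (x : so) := SO (qscale r (sp x)) (qscale r (sq x)).
(* (p + lq)(p' + lq') = pp' + q' q^c + l(p^c q' + p' q), which is the product
   determined by (lp)(lq) = q p^c, p(lq) = l(p^c q), (lp)q = l(q p). *)
Definition somul (x y : so) :=
  SO (qadd (qmul (sp x) (sp y)) (qmul (sq y) (qconj (sq x))))
     (qadd (qmul (qconj (sp x)) (sq y)) (qmul (sp y) (sq x))).
Definition soconj (x : so) := SO (qconj (sp x)) (qopp (sq x)).

Definition sot (x : so) := soadd x (soconj x).
Definition son (x : so) := somul x (soconj x).

(* the real number r with n(x) = r (meaningful when n(x) is real; for SO
   one has n(p + lq) = n(p) - n(q) in R) *)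
Definition sonr (x : so) := q0 (sp (son x)).

Definition soinv (x : so) := soscale (sonr x)^-1 (soconj x).

Definition is_real_so (x : so) : Prop := exists r : R, x = soreal r.

Definition sore (x : so) := soscale (2^-1) (sot x).
Definition soim (x : so) := sosub x (sore x).

Definition SA : set so := [set J | sot J = sozero /\ son J = soreal 1].

Definition sopt (a b : R) (J : so) := soadd (soreal a) (soscale b J).

(* S_x for x = alpha + beta J:  {alpha + beta I : I in S_A} *)
Definition sphere (a b : R) : set so := [set sopt a b I | I in SA].

Definition V (h : so -> so) : set so := [set y | h y = sozero].

Definition affine_2plane (S : set so) : Prop :=
  exists p u v : so,
    (forall r s : R, soadd (soscale r u) (soscale s v) = sozero -> r = 0 /\ s = 0)
    /\ S = [set soadd p (soadd (soscale r u) (soscale s v)) | r in [set: R] & s in [set: R]].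

(** Complexification A_C: pairs (a, b) standing for a + i b.
    Stem functions are defined on D \subseteq C, with C identified with R * R
    (alpha + i beta ~ (alpha, beta)). *)
Definition soC := (so * so)%type.
Definition ACbar (z : soC) : soC := (z.1, soopp z.2).
Definition ACmul (z w : soC) : soC :=
  (sosub (somul z.1 w.1) (somul z.2 w.2), soadd (somul z.1 w.2) (somul z.2 w.1)).
Definition ACconj (z : soC) : soC := (soconj z.1, soconj z.2).

Definition conj_invariant (D : set (R * R)) : Prop :=
  forall a b, D (a, b) -> D (a, - b).

Definition stem (D : set (R * R)) (F : R -> R -> soC) : Prop :=
  forall a b, D (a, b) -> F a (- b) = ACbar (F a b).

Definition stem_mul (F G : R -> R -> soC) : R -> R -> soC :=
  fun a b => ACmul (F a b) (G a b).
Definition stem_conj (F : R -> R -> soC) : R -> R -> soC :=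
  fun a b => ACconj (F a b).

(* Induced slice function I(F): f(alpha + beta J) = F1(alpha + i beta) + J F2(alpha + i beta).
   A point y of Q_A is written canonically as alpha + beta J with
   alpha = re(y), beta = sqrt(n(y) - alpha^2) >= 0 and J = beta^{-1} im(y);
   by the stem condition this agrees with every other representation
   alpha + beta J (= alpha + (-beta)(-J)), and for real y (beta = 0)
   F2(alpha, 0) = 0.  Outside Omega the value is irrelevant. *)
Definition sliceI (F : R -> R -> soC) (y : so) : so :=
  let a := q0 (sp y) in
  let b := Num.sqrt (sonr y - a ^+ 2) in
  let J := soscale b^-1 (soim y) in
  soadd (F a b).1 (somul J (F a b).2).

Definition sph_value (f : so -> so) (x : so) : so :=
  soscale (2^-1) (soadd (f x) (f (soconj x))).
Definition sph_deriv (f : so -> so) (x : so) : so :=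
  soscale (2^-1) (somul (soinv (soim x)) (sosub (f x) (f (soconj x)))).

End SplitOctonions.

(* Main.v *)
Require Import Defs.
From HB Require Import structures.
From mathcomp Require Import all_boot all_order all_algebra.
From mathcomp Require Import boolp classical_sets reals.
From mathcomp Require Import ring lra.
Import Order.TTheory GRing.Theory Num.Theory.
Set Implicit Arguments. Unset Strict Implicit. Unset Printing Implicit Defensive.
Local Open Scope ring_scope.
Local Open Scope classical_set_scope.

Definition sps (R : realType) (e c : so R) := q0 (sp (soadd (somul e (soconj c)) (somul c (soconj e)))).
Lemma so_ext (R : realType) (x y : so R) :
  q0 (sp x) = q0 (sp y) -> q1 (sp x) = q1 (sp y) -> q2 (sp x) = q2 (sp y) -> q3 (sp x) = q3 (sp y) ->
  q0 (sq x) = q0 (sq y) -> q1 (sq x) = q1 (sq y) -> q2 (sq x) = q2 (sq y) -> q3 (sq x) = q3 (sq y) -> x = y.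
Proof. by case: x => [[????][????]]; case: y => [[????][????]] /= -> -> -> -> -> -> -> ->. Qed.

Lemma quat_ext (R : realType) (x y : quat R) :
  q0 x = q0 y -> q1 x = q1 y -> q2 x = q2 y -> q3 x = q3 y -> x = y.
Proof. by case: x => ????; case: y => ???? /= -> -> -> ->. Qed.

Ltac dsall := repeat match goal with
  | x : so _ |- _ => destruct x as [[? ? ? ?] [? ? ? ?]]
  | x : quat _ |- _ => destruct x as [? ? ? ?] end.
Ltac sid := intros; dsall; apply: so_ext; cbv delta [sonr son sps]; simpl; ring.
Ltac qid := intros; dsall; apply: quat_ext; simpl; ring.

Section S.
Variable R : realType.
Implicit Types x y z c e i j : so R.
Lemma son_real x : son x = soreal (sonr x). Proof. sid. Qed.
Lemma sot_real x : sot x = soreal (q0 (sp x) + q0 (sp x)). Proof. sid. Qed.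
Lemma soconj_sot x : soconj x = soadd (sot x) (soopp x). Proof. sid. Qed.
Lemma soadd0l x : soadd (sozero R) x = x. Proof. sid. Qed.
Lemma soadd0r x : soadd x (sozero R) = x. Proof. sid. Qed.
Lemma soreal0 : soreal 0 = sozero R. Proof. sid. Qed.
Lemma somul0r x : somul x (sozero R) = sozero R. Proof. sid. Qed.
Lemma somul0l x : somul (sozero R) x = sozero R. Proof. sid. Qed.
Lemma sonr_mul x y : sonr (somul x y) = sonr x * sonr y.
Proof. dsall; rewrite /sonr /=; ring. Qed.
Lemma sonr_opp x : sonr (soopp x) = sonr x. Proof. dsall; rewrite /sonr /=; ring. Qed.
Lemma sonr_conj x : sonr (soconj x) = sonr x. Proof. dsall; rewrite /sonr /=; ring. Qed.
Lemma sonr_scale k x : sonr (soscale k x) = k ^+ 2 * sonr x.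
Proof. dsall; rewrite /sonr /=; ring. Qed.
Lemma soconjK x : soconj (soconj x) = x. Proof. sid. Qed.
Lemma mul_conj_r x y : somul (somul x y) (soconj y) = soscale (sonr y) x.
Proof. rewrite /sonr. sid. Qed.
Lemma mul_conj_l x y : somul (soconj y) (somul y x) = soscale (sonr y) x.
Proof. rewrite /sonr. sid. Qed.
Lemma conj_mul x y : soconj (somul x y) = somul (soconj y) (soconj x). Proof. sid. Qed.
Lemma moufang1 c x : somul (somul (soconj c) x) c = somul (soconj c) (somul x c). Proof. sid. Qed.
Lemma leftalt x c : somul x (somul x c) = somul (somul x x) c. Proof. sid. Qed.
Lemma sq_eq x : somul x x = soadd (somul (sot x) x) (soopp (son x)). Proof. sid. Qed.
Lemma somul_reall r x : somul (soreal r) x = soscale r x. Proof. sid. Qed.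
Lemma somul_realr r x : somul x (soreal r) = soscale r x. Proof. sid. Qed.
Lemma soscale0 x : soscale 0 x = sozero R. Proof. sid. Qed.
Lemma soscale1 x : soscale 1 x = x. Proof. sid. Qed.
Lemma soscaleA k l x : soscale k (soscale l x) = soscale (k * l) x. Proof. sid. Qed.
Lemma somul_scalel k x y : somul (soscale k x) y = soscale k (somul x y). Proof. sid. Qed.
Lemma somul_scaler k x y : somul x (soscale k y) = soscale k (somul x y). Proof. sid. Qed.
Lemma somul_oppl x y : somul (soopp x) y = soopp (somul x y). Proof. sid. Qed.
Lemma somul_oppr x y : somul x (soopp y) = soopp (somul x y). Proof. sid. Qed.
Lemma soconj_opp x : soconj (soopp x) = soopp (soconj x). Proof. sid. Qed.
Lemma sooppK x : soopp (soopp x) = x. Proof. sid. Qed.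
Lemma soscaleN1 x : soscale (-1) x = soopp x. Proof. sid. Qed.

Lemma sps_real e c : soadd (somul e (soconj c)) (somul c (soconj e)) = soreal (sps e c).
Proof. rewrite /sps; sid. Qed.
Lemma sps_conj e c : sps (soconj e) (soconj c) = sps e c.
Proof. dsall; rewrite /sps /=; ring. Qed.
Lemma sps_zero i c : sps (soopp (somul i c)) c = - sonr c * (q0 (sp i) + q0 (sp i)).
Proof. dsall; rewrite /sps /sonr /=; ring. Qed.
Lemma nf_real e c : soadd (somul e (soconj e)) (soopp (somul c (soconj c))) = soreal (sonr e - sonr c).
Proof. rewrite /sonr; sid. Qed.
Lemma sot_mulconj e c : sot (somul e (soconj c)) = soreal (sps e c).
Proof. rewrite /sps; sid. Qed.
Lemma sosub_eq e x : soadd e x = sozero R -> e = soopp x.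
Proof. move=> H. have -> : e = soadd (soadd e x) (soopp x) by sid. rewrite H; sid. Qed.
Lemma soopp_eq0 x : x = soopp x -> x = sozero R.
Proof. case: x => [[????][????]] [] /= *; apply: so_ext => /=; lra. Qed.
Lemma soscale_inj k x : k != 0 -> soscale k x = sozero R -> x = sozero R.
Proof. move=> k0 H; rewrite -(soscale1 x) -(mulVf k0) -soscaleA H; sid. Qed.

Lemma SA_re i : SA i -> q0 (sp i) = 0.
Proof. case=> H _; move: (congr1 (fun z => q0 (sp z)) H); case: i {H} => [[????][????]] /=; lra. Qed.
Lemma SA_n i : SA i -> sonr i = 1.
Proof. by case=> _ H; rewrite /sonr H. Qed.
Lemma SA_conj i : SA i -> soconj i = soopp i.
Proof. by case=> H _; rewrite soconj_sot H soadd0l. Qed.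
Lemma SA_intro i : q0 (sp i) = 0 -> sonr i = 1 -> SA i.
Proof. by move=> h1 h2; split; [rewrite sot_real h1 addr0 soreal0 | rewrite son_real h2]. Qed.
Lemma SA_neq0 i : SA i -> i <> sozero R.
Proof. move=> /SA_n H E; move: H; rewrite E /sonr /=; lra. Qed.
Lemma SA_opp i : SA i -> SA (soopp i).
Proof. move=> H; apply: SA_intro; first by rewrite /= SA_re // oppr0. by rewrite sonr_opp SA_n. Qed.
Lemma SA_sq i : SA i -> somul i i = soreal (-1).
Proof. move=> H; rewrite sq_eq; case: H => -> ->. sid. Qed.
End S.

Section S2.
Variable R : realType.
Implicit Types x y z c e i j I : so R.

Definition Zs (E C : so R) := [set I | SA I /\ soadd E (somul I C) = sozero R].
Definition Istar (E C : so R) := soscale (- (sonr C)^-1) (somul E (soconj C)).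

Lemma re_scale k x : q0 (sp (soscale k x)) = k * q0 (sp x). Proof. by []. Qed.
Lemma mul_conj_r' x y : somul (somul x (soconj y)) y = soscale (sonr y) x. Proof. sid. Qed.
Lemma add_scaleN1 x : soadd x (soscale (-1) x) = sozero R. Proof. sid. Qed.

Lemma Z_nec E C I : Zs E C I -> sonr E = sonr C /\ sps E C = 0.
Proof.
case=> hI /sosub_eq ->; split; first by rewrite sonr_opp sonr_mul SA_n // mul1r.
by rewrite sps_zero SA_re // addr0 mulr0.
Qed.

Lemma Z_suff E C : sonr C != 0 -> sonr E = sonr C -> sps E C = 0 -> Zs E C (Istar E C).
Proof.
move=> hn he hs; split.
  apply: SA_intro.
    have := congr1 (fun z => q0 (sp z)) (sot_mulconj E C); rewrite sot_real hs /= => h.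
    rewrite /Istar /=; apply/eqP; rewrite mulf_eq0; apply/orP; right; apply/eqP; lra.
  rewrite /Istar sonr_scale sonr_mul sonr_conj he; field; exact: hn.
rewrite /Istar somul_scalel mul_conj_r' soscaleA.
by rewrite mulNr mulVf // add_scaleN1.
Qed.

Lemma Z_uniq E C I : sonr C != 0 -> Zs E C I -> I = Istar E C.
Proof.
move=> hn [hI /sosub_eq ->]; rewrite /Istar somul_oppl mul_conj_r.
rewrite -soscaleN1 soscaleA soscaleA.
by rewrite (_ : - (sonr C)^-1 * (-1) * sonr C = 1) ?soscale1 //; field.
Qed.

Lemma sonr_sopt a b x : sonr (sopt a b x) = a ^+ 2 + a * b * (q0 (sp x) + q0 (sp x)) + b ^+ 2 * sonr x.
Proof. dsall; rewrite /sonr /=; ring. Qed.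
Lemma re_sopt a b x : q0 (sp (sopt a b x)) = a + b * q0 (sp x).
Proof. dsall; rewrite /=; ring. Qed.
Lemma sub_sopt a b x : sosub (sopt a b x) (soreal a) = soscale b x. Proof. sid. Qed.

Lemma half2 (a : R) : 2^-1 * (a + a) = a. Proof. by field. Qed.

Lemma soim_sopt a b I : SA I -> soim (sopt a b I) = soscale b I.
Proof.
move=> hI; rewrite /soim /sore sot_real re_sopt SA_re // mulr0 addr0.
have -> : soscale (2^-1 : R) (soreal (a + a)) = soreal a.
  apply: so_ext => /=; rewrite ?mulr0 //; exact: half2.
exact: sub_sopt.
Qed.

Lemma eval_slice (G : R -> R -> soC R) a b I : SA I -> G a (-b) = ACbar (G a b) ->
  sliceI G (sopt a b I) = soadd (G a b).1 (somul I (G a b).2).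
Proof.
move=> hI hG; rewrite /sliceI re_sopt SA_re // mulr0 addr0 sonr_sopt SA_re // addr0 mulr0 addr0.
rewrite SA_n // mulr1 (_ : a ^+ 2 + b ^+ 2 - a ^+ 2 = b ^+ 2); last by ring.
rewrite sqrtr_sqr soim_sopt // soscaleA.
case: (ltrgt0P b) => hb.
- by rewrite mulVf ?soscale1 // gt_eqF.
- rewrite hG /ACbar /= invrN mulNr mulVf ?lt_eqF // soscaleN1.
  by rewrite somul_oppl somul_oppr sooppK.
- subst b; rewrite invr0 mul0r soscale0 somul0l.
  rewrite oppr0 in hG.
  have h2 : (G a 0).2 = sozero R by apply: soopp_eq0; rewrite {1}hG.
  by rewrite h2 somul0r.
Qed.

Lemma stem_conj_pt (F : R -> R -> soC R) a b : F a (-b) = ACbar (F a b) ->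
  stem_conj F a (-b) = ACbar (stem_conj F a b).
Proof. by move=> H; rewrite /stem_conj H /ACconj /ACbar /= soconj_opp. Qed.

Lemma stem_mul_pt (F G : R -> R -> soC R) a b : F a (-b) = ACbar (F a b) ->
  G a (-b) = ACbar (G a b) -> stem_mul F G a (-b) = ACbar (stem_mul F G a b).
Proof.
move=> H1 H2; rewrite /stem_mul H1 H2; move: (F a b) (G a b) => [z1 z2] [w1 w2].
rewrite /ACmul /ACbar /=; congr (_, _); sid.
Qed.
End S2.

Definition qn (R : realType) (p : quat R) := q0 p ^+ 2 + q1 p ^+ 2 + q2 p ^+ 2 + q3 p ^+ 2.
Definition qdot (R : realType) (p q : quat R) := q0 p * q0 q + q1 p * q1 q + q2 p * q2 q + q3 p * q3 q.
Definition kk (R : realType) (p q Q : quat R) :=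
  SO (qscale (- (qn p)^-1) (qmul (qmul q (qconj Q)) (qconj p))) Q.
Definition mm (R : realType) (p q : quat R) := qmul (qconj p) q.
Definition uu (R : realType) (p q X : quat R) := kk p q (qmul X (mm p q)).
Definition omega (R : realType) (p q A B : quat R) :=
  qadd (qscale (qn q / qn p) (qmul (qmul (qconj p) (qconj A)) p)) (qmul (qmul B (qconj q)) p).
Definition pr (R : realType) (x y : so R) := 2 * (qdot (sp x) (sp y) - qdot (sq x) (sq y)).

Section S3.
Variable R : realType.
Implicit Types x y z c e i j I : so R.
Implicit Types p q A B P Q X Y : quat R.

Ltac sfd := intros; dsall; apply: so_ext; unfold uu, kk, mm, qn in *; simpl in *; field; done.
Ltac qfd := intros; dsall; apply: quat_ext; unfold qn in *; simpl in *; field; done.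

Lemma sonr_SO A B : sonr (SO A B) = qn A - qn B.
Proof. dsall; rewrite /sonr /qn /=; ring. Qed.

Lemma F1 p q Q : qn p != 0 ->
  somul (kk p q Q) (SO p q) = SO (qzero R) (qscale (1 - qn q / qn p) (qmul p Q)).
Proof. sfd. Qed.
Lemma F2 p q X : qn p != 0 -> q0 (sp (uu p q X)) = - qn q * q0 X.
Proof. intros; dsall; unfold uu, kk, mm, qn in *; simpl in *; field; done. Qed.

Lemma F3 p q Q : qn p != 0 -> sonr (kk p q Q) = qn Q * (qn q / qn p - 1).
Proof. intros; dsall; unfold sonr, uu, kk, mm, qn in *; simpl in *; field; done. Qed.

Lemma F4 x y : sonr (soadd x y) = sonr x + pr x y + sonr y.
Proof. dsall; rewrite /sonr /pr /qdot /=; ring. Qed.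

Lemma F4' p q A B X : qn p != 0 -> pr (SO A B) (uu p q X) = - 2 * qdot X (omega p q A B).
Proof. intros; dsall; unfold pr, qdot, omega, uu, kk, mm, qn in *; simpl in *; field; done. Qed.

Lemma F5 p q X Y r s : uu p q (qadd (qscale r X) (qscale s Y)) = soadd (soscale r (uu p q X)) (soscale s (uu p q Y)).
Proof. intros; dsall; apply: so_ext; unfold uu, kk, mm, qn in *; simpl in *; ring. Qed.

Lemma F6 p q P Q : qn p != 0 -> qadd (qmul P p) (qmul q (qconj Q)) = qzero R ->
  SO P Q = kk p q Q.
Proof.
move=> hp H; rewrite /kk; congr SO.
have -> : P = qscale ((qn p)^-1) (qmul (qmul P p) (qconj p)) by qfd.
have -> : qmul P p = qopp (qmul q (qconj Q)).
  move: H; dsall; move=> [] *; apply: quat_ext => /=; lra.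
qid.
Qed.

Lemma F7 p q Q : qn p != 0 -> qn q != 0 ->
  Q = qmul (qscale ((qn p * qn q)^-1) (qmul Q (qconj (mm p q)))) (mm p q).
Proof. move=> hp hq; have hpq := mulf_neq0 hp hq; dsall; apply: quat_ext; unfold mm, qn in *; simpl in *; field; by rewrite ?hp ?hq. Qed.

Lemma F8 p q Y : qn p != 0 -> qn q != 0 -> qmul Y (mm p q) = qzero R -> Y = qzero R.
Proof.
move=> hp hq H; have hpq := mulf_neq0 hp hq; have -> : Y = qscale ((qn p * qn q)^-1) (qmul (qmul Y (mm p q)) (qconj (mm p q))).
  clear H; dsall; apply: quat_ext; unfold mm, qn in *; simpl in *; field; by rewrite ?hp ?hq.
rewrite H; qid.
Qed.
Lemma qn_mul p q : qn (qmul p q) = qn p * qn q.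
Proof. dsall; rewrite /qn /=; ring. Qed.
Lemma qn_conj p : qn (qconj p) = qn p.
Proof. dsall; rewrite /qn /=; ring. Qed.

Lemma qn_eq0 p : qn p = 0 -> p = qzero R.
Proof. case: p => a0 a1 a2 a3; rewrite /qn /= => h; apply: quat_ext => /=; nra. Qed.

Lemma qn_addreal A t : q0 A = 0 -> qn (qadd A (Quat t 0 0 0)) = qn A + t ^+ 2.
Proof. case: A => a0 a1 a2 a3 /= ->; rewrite /qn /=; ring. Qed.

Lemma omega_nz p q A B : qn p != 0 -> qn q = qn p -> q0 A = 0 -> qn A - qn B = 1 ->
  ~ [/\ q1 (omega p q A B) = 0, q2 (omega p q A B) = 0 & q3 (omega p q A B) = 0].
Proof.
move=> hp hq hA hAB [h1 h2 h3].
set w0 := q0 (omega p q A B).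
set t := w0 / qn p.
have Ew : omega p q A B = Quat w0 0 0 0 by apply: quat_ext.
have Eo : omega p q A B = qadd (qmul (qmul (qconj p) (qopp A)) p) (qmul (qmul B (qconj q)) p).
  rewrite /omega hq divff //; clear -hA; case: A hA => a0 a1 a2 a3 /= ->; qid.
have E1 : qmul (qmul B (qconj q)) p = qadd (Quat w0 0 0 0) (qmul (qmul (qconj p) A) p).
  rewrite -Ew Eo; qid.
have E2 : qmul (qmul (qconj p) (qadd A (Quat t 0 0 0))) p = qadd (Quat w0 0 0 0) (qmul (qmul (qconj p) A) p).
  rewrite /t; clear -hp; dsall; apply: quat_ext; unfold qn in *; simpl in *; field; done.
have := congr1 (@qn R) (etrans E1 (esym E2)).
rewrite !qn_mul !qn_conj hq.
rewrite qn_addreal //.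
move=> H.
have H2 : (qn B - qn A - t ^+ 2) * (qn p * qn p) = 0.
  transitivity (qn B * qn p * qn p - qn p * (qn A + t ^+ 2) * qn p); first ring.
  by rewrite H subrr.
move/eqP: H2; rewrite mulf_eq0 mulf_eq0 (negbTE hp) /= orbF => /eqP H3.
nra.
Qed.

Definition dot3 (w : quat R) (X : quat R) := q1 w * q1 X + q2 w * q2 X + q3 w * q3 X.

Lemma basis3 (w : quat R) : ~ [/\ q1 w = 0, q2 w = 0 & q3 w = 0] ->
  exists X1 X2 : quat R, [/\ q0 X1 = 0 /\ q0 X2 = 0, dot3 w X1 = 0 /\ dot3 w X2 = 0,
   (forall r s, qadd (qscale r X1) (qscale s X2) = qzero R -> r = 0 /\ s = 0) &
   (forall X, q0 X = 0 -> dot3 w X = 0 -> exists r s, X = qadd (qscale r X1) (qscale s X2))].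
Proof.
case: w => w0 w1 w2 w3 /= hw; rewrite /dot3 /=.
have [h1|h1] := eqVneq w1 0; last first.
  exists (Quat 0 (-w2) w1 0), (Quat 0 (-w3) 0 w1); split => //=.
  - by split; ring.
  - move=> r s [] _ _ e2 e3; move: e2 e3; rewrite !mulr0 !addr0 !add0r => /eqP e2 /eqP e3.
    by move: e2 e3; rewrite !mulf_eq0 (negbTE h1) !orbF => /eqP -> /eqP ->.
  - move=> [x0 x1 x2 x3] /= -> hx; exists (x2 / w1), (x3 / w1); apply: quat_ext => /=.
    + by rewrite !mulr0 addr0.
    + have -> : x2 / w1 * - w2 + x3 / w1 * - w3 = - (w2 * x2 + w3 * x3) / w1 by field.
      apply: (mulIf h1); rewrite mulfVK //; lra.
    + by rewrite mulfVK // mulr0 addr0.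
    + by rewrite mulr0 add0r mulfVK.
have [h2|h2] := eqVneq w2 0; last first.
  exists (Quat 0 w2 (-w1) 0), (Quat 0 0 (-w3) w2); split => //=.
  - by split; ring.
  - move=> r s [] _ e1 _ e3; move: e1 e3; rewrite !mulr0 !addr0 !add0r => /eqP e1 /eqP e3.
    by move: e1 e3; rewrite !mulf_eq0 (negbTE h2) !orbF => /eqP -> /eqP ->.
  - move=> [x0 x1 x2 x3] /= -> hx; exists (x1 / w2), (x3 / w2); apply: quat_ext => /=.
    + by rewrite !mulr0 addr0.
    + by rewrite mulfVK // mulr0 addr0.
    + have -> : x1 / w2 * - w1 + x3 / w2 * - w3 = - (w1 * x1 + w3 * x3) / w2 by field.
      apply: (mulIf h2); rewrite mulfVK //; lra.
    + by rewrite mulr0 add0r mulfVK.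
have h3 : w3 != 0.
  apply/eqP => h3; apply: hw; split => //; exact/eqP.
exists (Quat 0 w3 0 (-w1)), (Quat 0 0 w3 (-w2)); split => //=.
- by split; ring.
- move=> r s [] _ e1 e2 _; move: e1 e2; rewrite !mulr0 !addr0 !add0r => /eqP e1 /eqP e2.
  by move: e1 e2; rewrite !mulf_eq0 (negbTE h3) !orbF => /eqP -> /eqP ->.
- move=> [x0 x1 x2 x3] /= -> hx; exists (x1 / w3), (x2 / w3); apply: quat_ext => /=.
  + by rewrite !mulr0 addr0.
  + by rewrite mulfVK // mulr0 addr0.
  + by rewrite mulr0 add0r mulfVK.
  + have -> : x1 / w3 * - w1 + x2 / w3 * - w2 = - (w1 * x1 + w2 * x2) / w3 by field.
    apply: (mulIf h3); rewrite mulfVK //; lra.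
Qed.
End S3.

Section S4.
Variable R : realType.
Implicit Types x y z c e i j I : so R.
Implicit Types p q A B P Q X Y : quat R.

Lemma mul_sub_l x y c : somul (sosub x y) c = sosub (somul x c) (somul y c). Proof. sid. Qed.
Lemma mul_add_l x y c : somul (soadd x y) c = soadd (somul x c) (somul y c). Proof. sid. Qed.
Lemma sosubxx x : sosub x x = sozero R. Proof. sid. Qed.
Lemma add_sub x y : soadd y (sosub x y) = x. Proof. sid. Qed.
Lemma re_sub x y : q0 (sp (sosub x y)) = q0 (sp x) - q0 (sp y). Proof. by []. Qed.
Lemma re_add x y : q0 (sp (soadd x y)) = q0 (sp x) + q0 (sp y). Proof. by []. Qed.

Lemma dot3_lin w r s X1 X2 : dot3 w (qadd (qscale r X1) (qscale s X2)) = r * dot3 w X1 + s * dot3 w X2.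
Proof. dsall; rewrite /dot3 /=; ring. Qed.

Lemma plane I0 c : SA I0 -> c <> sozero R -> sonr c = 0 ->
  affine_2plane [set I | SA I /\ somul I c = somul I0 c].
Proof.
case: c => p q; case: I0 => A B hI0 hc0 hc.
have hpq : qn q = qn p by move: hc; rewrite sonr_SO => /eqP; rewrite subr_eq0 => /eqP.
have hp : qn p != 0.
  apply/eqP => hp; apply: hc0; rewrite (qn_eq0 hp) (qn_eq0 (etrans hpq hp)); sid.
have hq : qn q != 0 by rewrite hpq.
have hA : q0 A = 0 by have := SA_re hI0.
have hAB : qn A - qn B = 1 by rewrite -sonr_SO SA_n.
have [X1 [X2 [[h01 h02] [hd1 hd2] hind hspan]]] := basis3 (omega_nz hp hpq hA hAB).
exists (SO A B), (uu p q X1), (uu p q X2); split.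
  move=> r s; rewrite -F5 => H.
  have := congr1 (@sq R) H; rewrite /uu /kk /= => /(F8 hp hq).
  exact: hind.
apply/seteqP; split => I /=.
  move=> [hI hIc].
  set k := sosub I (SO A B).
  have kc : somul k (SO p q) = sozero R by rewrite /k mul_sub_l hIc sosubxx.
  have Ek : k = kk p q (sq k).
    move: kc; case: k => P Q kc; apply: F6 => //.
    exact: (congr1 (@sp R) kc).
  set X := qscale ((qn p * qn q)^-1) (qmul (sq k) (qconj (mm p q))).
  have Ek2 : k = uu p q X by rewrite /uu /X -F7.
  have hX0 : q0 X = 0.
    have : q0 (sp k) = 0 by rewrite /k re_sub (SA_re hI) (SA_re hI0) subrr.
    rewrite Ek2 F2 // => /eqP; rewrite mulf_eq0 oppr_eq0 (negbTE hq) /= => /eqP.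
    by [].
  have hX : dot3 (omega p q A B) X = 0.
    have := F4 (SO A B) k; rewrite /k add_sub -/k SA_n // SA_n // {2}Ek F3 // hpq divff // subrr mulr0 addr0.
    rewrite Ek2 F4' // => /eqP h.
    have : qdot X (omega p q A B) = 0 by lra.
    by rewrite /qdot hX0 mul0r add0r => h'; rewrite /dot3 -h'; ring.
  have [r [s Hrs]] := hspan X hX0 hX.
  exists r => //; exists s => //.
  by rewrite -F5 -Hrs -Ek2 /k add_sub.
move=> [r _ [s _ <-]].
rewrite -F5; set X := qadd _ _.
have hX0 : q0 X = 0 by rewrite /X /= h01 h02 !mulr0 addr0.
have hX : dot3 (omega p q A B) X = 0.
  by rewrite /X dot3_lin hd1 hd2 !mulr0 addr0.
split.
  apply: SA_intro.
    by rewrite re_add SA_re // F2 // hX0 mulr0 addr0.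
  rewrite F4 SA_n // F4' // /uu F3 // hpq divff // subrr mulr0 addr0.
  have -> : qdot X (omega p q A B) = dot3 (omega p q A B) X.
    rewrite /qdot /dot3 hX0 mul0r add0r; ring.
  by rewrite hX mulr0 addr0.
rewrite mul_add_l /uu F1 // hpq divff // subrr.
have -> : SO (qzero R) (qscale 0 (qmul p (qmul X (mm p q)))) = sozero R by sid.
by rewrite soadd0r.
Qed.
End S4.

Section S5.
Variable R : realType.
Implicit Types x y z c e i j I J E C : so R.

Lemma Vimage (g : so R -> so R) a b E C :
  (forall I, SA I -> g (sopt a b I) = soadd E (somul I C)) ->
  V g `&` sphere a b = [set sopt a b I | I in Zs E C].
Proof.
move=> ev; apply/seteqP; split => y /=.
  move=> [gy [I hI hy]]; exists I => //; split => //; by rewrite -ev // hy.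
move=> [I [hI hz] <-]; split; last by exists I.
by rewrite /V /= ev.
Qed.

Lemma NF_zero I r s : SA I -> soadd (soreal r) (soscale s I) = sozero R -> r = 0 /\ s = 0.
Proof.
move=> hI H.
have hr : r = 0.
  have : q0 (sp (soadd (soreal r) (soscale s I))) = q0 (sp (sozero R)) by rewrite H.
  by rewrite re_add re_scale (SA_re hI) /= mulr0 addr0.
split => //; move: H; rewrite hr soreal0 soadd0l => H.
apply/eqP; apply: contraT => hs; case: (SA_neq0 hI (soscale_inj hs H)).
Qed.

Lemma add_oppl x : soadd (soopp x) x = sozero R. Proof. sid. Qed.
Lemma add_opp_eq x y : soadd (soopp x) y = sozero R -> y = x.
Proof. move=> H; have -> : y = soadd x (soadd (soopp x) y) by sid. by rewrite H soadd0r. Qed.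

Lemma zplane a b E C I0 : C <> sozero R -> sonr C = 0 -> b != 0 -> Zs E C I0 ->
  affine_2plane [set sopt a b I | I in Zs E C].
Proof.
move=> hC hn hb [hI0 hz].
have -> : Zs E C = [set I | SA I /\ somul I C = somul I0 C].
  apply/seteqP; split => I /= [hI h]; split => //.
    by move/sosub_eq: hz => hE; move: h; rewrite hE => /add_opp_eq.
  by move/sosub_eq: hz => ->; rewrite h add_oppl.
have [p [u [v [hind ->]]]] := plane hI0 hC hn.
exists (sopt a b p), (soscale b u), (soscale b v); split.
  move=> r s H; apply: hind.
  apply: (soscale_inj hb); rewrite -H; sid.
apply/seteqP; split => y /=.
  move=> [I [r _ [s _ <-]] <-]; exists r => //; exists s => //; sid.
move=> [r _ [s _ <-]]; exists (soadd p (soadd (soscale r u) (soscale s v))).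
  by exists r => //; exists s.
sid.
Qed.

Lemma img0 (f : so R -> so R) (A : set (so R)) : A = set0 -> f @` A = set0.
Proof. by move=> ->; rewrite image_set0. Qed.

Lemma sq_zero J c : SA J -> somul J c = sozero R -> c = sozero R.
Proof.
move=> hJ H; have : somul J (somul J c) = soopp c by rewrite leftalt SA_sq // somul_reall soscaleN1.
by rewrite H somul0r => /(congr1 (@soopp R)); rewrite sooppK => <-; sid.
Qed.

Lemma soconj_sopt a b J : SA J -> soconj (sopt a b J) = sopt a b (soopp J).
Proof. move=> hJ; rewrite -SA_conj //; clear hJ; sid. Qed.

Lemma sore_sopt a b I : SA I -> sore (sopt a b I) = soreal a.
Proof.
move=> hI; rewrite /sore sot_real re_sopt SA_re // mulr0 addr0.
apply: so_ext => /=; rewrite ?mulr0 //; exact: half2.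
Qed.

Lemma real_b0 a b J : SA J -> is_real_so (sopt a b J) -> b = 0.
Proof.
move=> hJ [r hr]; apply/eqP; apply: contraT => hb.
have H : soscale b J = soreal (r - a) by rewrite -(sub_sopt a b J) hr; clear; sid.
have HJ : J = soreal (b^-1 * (r - a)).
  rewrite -(soscale1 J) -(mulVf hb) -soscaleA H; sid.
have h0 := SA_re hJ; rewrite HJ /= in h0.
by case: (SA_neq0 hJ); rewrite HJ h0 soreal0.
Qed.

Lemma b0_real a J : is_real_so (sopt a 0 J).
Proof. exists a; sid. Qed.

Lemma deriv_id J c e k : somul (soscale k (soopp J)) (sosub (soadd e (somul J c)) (soadd e (somul (soopp J) c)))
   = soscale (-(k + k)) (somul J (somul J c)).
Proof. sid. Qed.

Lemma sval_id J c e : soscale (2^-1) (soadd (soadd e (somul J c)) (soadd e (somul (soopp J) c))) = e.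
Proof.
have -> : soadd (soadd e (somul J c)) (soadd e (somul (soopp J) c)) = soscale 2 e by sid.
by rewrite soscaleA mulVf ?soscale1 // pnatr_eq0.
Qed.

Lemma soconj_scale k x : soconj (soscale k x) = soscale k (soconj x). Proof. sid. Qed.

Lemma soinv_scale k c : k != 0 -> sonr c != 0 ->
  soinv (soscale k c) = soscale ((k * sonr c)^-1) (soconj c).
Proof.
move=> hk hc; rewrite /soinv sonr_scale soconj_scale soscaleA; congr soscale.
by field; rewrite hk hc.
Qed.
End S5.
Section S6.
Variable R : realType.
Implicit Types x y z c e i j I J E C W : so R.
Lemma soscale_z k : soscale k (sozero R) = sozero R. Proof. sid. Qed.
Lemma soconj_z : soconj (sozero R) = sozero R. Proof. sid. Qed.
Lemma soopp_z : soopp (sozero R) = sozero R. Proof. sid. Qed.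
Lemma soreal_inj0 (r : R) : soreal r = sozero R -> r = 0.
Proof. by move=> h; have : q0 (sp (soreal r)) = q0 (sp (sozero R)) by rewrite h. Qed.
Lemma sps_z : sps (sozero R) (sozero R) = 0. Proof. rewrite /sps /=; ring. Qed.
Lemma sonr_z : sonr (sozero R) = 0. Proof. rewrite /sonr /=; ring. Qed.
Lemma conj_sandwich a b c I0 : somul (somul (soconj c) (sopt a b (soopp I0))) c
   = soadd (soreal (a * sonr c)) (soscale (-b) (somul (somul (soconj c) I0) c)).
Proof. sid. Qed.
Lemma scale_add_real t u v W : soscale t (soadd (soreal u) (soscale v W)) = soadd (soreal (t * u)) (soscale (t * v) W).
Proof. sid. Qed.
Lemma sopt_scale a b m W : sopt a b (soscale m W) = soadd (soreal a) (soscale (b * m) W).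
Proof. sid. Qed.
Lemma sub_real_scale a K W : sosub (soreal a) (soscale K W) = soadd (soreal a) (soscale (- K) W).
Proof. sid. Qed.
Lemma conj_opp_mul I0 c : SA I0 -> soconj (soopp (somul I0 c)) = somul (soconj c) I0.
Proof. by move=> h; rewrite soconj_opp conj_mul (SA_conj h) somul_oppr sooppK. Qed.
Lemma stem_b0 (G : R -> R -> soC R) a b : G a (-b) = ACbar (G a b) -> b = 0 -> (G a b).2 = sozero R.
Proof. move=> h hb; move: h; rewrite hb oppr0 => h; apply: soopp_eq0; by rewrite {1}h. Qed.
End S6.

Unset Implicit Arguments.


Theorem proposition4p9 (R : realType) (D : set (R * R)) (F : R -> R -> soC R)
  (a b : R) (J : so R) :
  D !=set0 -> conj_invariant D -> stem D F ->
  D (a, b) -> SA J ->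
  let x := sopt a b J in
  let f := sliceI F in
  let fc := sliceI (stem_conj F) in
  let Nf := sliceI (stem_mul F (stem_conj F)) in
  let Sx := sphere a b in
  let d := sph_deriv f x in
  let case1 := V f `&` Sx = set0 in
  let case2 y := [/\ ~ is_real_so x, V f `&` Sx = [set y], son d <> sozero R
                   & y = sosub (sore x) (somul (sph_value f x) (soinv d))] in
  let case3 := [/\ ~ is_real_so x, affine_2plane (V f `&` Sx),
                   d <> sozero R & son d = sozero R] in
  let case4 := Sx `<=` V f /\ (~ is_real_so x -> d = sozero R) in
  (case1 \/ (exists y, case2 y) \/ case3 \/ case4) /\
  (case1 ->
     (V Nf `&` Sx = set0 /\ V fc `&` Sx = set0) \/
     (Sx `<=` V Nf /\ (V fc `&` Sx = set0 \/ affine_2plane (V fc `&` Sx)))) /\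
  (forall y, case2 y ->
     Sx `<=` V Nf /\
     V fc `&` Sx = [set somul (somul (soinv d) (soconj y)) d]) /\
  (case3 ->
     Sx `<=` V Nf /\ (V fc `&` Sx = set0 \/ affine_2plane (V fc `&` Sx))) /\
  (case4 -> Sx `<=` V fc /\ Sx `<=` V Nf).
Proof.
move=> _ _ hst hab hJ x f fc Nf Sx d case1 case2 case3 case4.
have hF := hst a b hab.
have hcb0 : b = 0 -> (F a b).2 = sozero R := stem_b0 hF.
set e := (F a b).1 in hcb0 *. set c := (F a b).2 in hcb0 *.
have ev_f : forall I, SA I -> f (sopt a b I) = soadd e (somul I c).
  by move=> I hI; exact: (eval_slice hI hF).
have ev_fc : forall I, SA I -> fc (sopt a b I) = soadd (soconj e) (somul I (soconj c)).
  by move=> I hI; exact: (eval_slice hI (stem_conj_pt hF)).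
have ev_N : forall I, SA I -> Nf (sopt a b I) = soadd (soreal (sonr e - sonr c)) (soscale (sps e c) I).
  move=> I hI; rewrite /Nf (eval_slice hI (stem_mul_pt hF (stem_conj_pt hF))).
  by rewrite /stem_mul /stem_conj /ACmul /ACconj /= /sosub nf_real sps_real somul_realr.
have Hf : V f `&` Sx = [set sopt a b I | I in Zs e c] := Vimage ev_f.
have Hfc : V fc `&` Sx = [set sopt a b I | I in Zs (soconj e) (soconj c)] := Vimage ev_fc.
have HN1 : sonr e = sonr c -> sps e c = 0 -> Sx `<=` V Nf.
  move=> h1 h2 y [I hI <-]; rewrite /V /= ev_N // h1 subrr h2 soreal0 soscale0 soadd0l.
  by [].
have HN2 : ~ (sonr e = sonr c /\ sps e c = 0) -> V Nf `&` Sx = set0.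
  move=> hn; apply/seteqP; split => y //= [hy [I hI hIy]]; apply: hn.
  move: hy; rewrite -hIy /V /= ev_N // => /(NF_zero hI) [h1 h2]; split => //.
  by apply/eqP; rewrite -subr_eq0; apply/eqP.
have ZfcN : forall I, Zs (soconj e) (soconj c) I -> sonr e = sonr c /\ sps e c = 0.
  by move=> I /Z_nec; rewrite !sonr_conj sps_conj.
have hcb : c <> sozero R -> b != 0.
  by move=> hc; apply/eqP => hb; apply: hc; exact: hcb0.
have hnreal : b != 0 -> ~ is_real_so x.
  by move=> hb /(real_b0 hJ) /eqP; rewrite (negbTE hb).
have hx_real : b = 0 -> is_real_so x by rewrite /x => ->; exact: b0_real.
have hbnr : ~ is_real_so x -> b != 0.
  by move=> hnr; apply/eqP => hb; apply: hnr; exact: hx_real.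
have SxJ : Sx x by exists J.
have Hd : b != 0 -> d = soscale b^-1 c.
  move=> hb; rewrite /d /sph_deriv /x soim_sopt // (soconj_sopt _ _ hJ) (ev_f _ hJ) (ev_f _ (SA_opp hJ)).
  rewrite soinv_scale ?SA_n ?oner_neq0 // (SA_conj hJ) deriv_id leftalt (SA_sq hJ) somul_reall.
  rewrite !soscaleA; congr soscale; field; exact: hb.
have Hsv : sph_value f x = e.
  rewrite /sph_value /x (soconj_sopt _ _ hJ) (ev_f _ hJ) (ev_f _ (SA_opp hJ)).
  by rewrite -{3}(sval_id J c e); congr soscale.
have FCalt : c <> sozero R -> sonr c = 0 -> V fc `&` Sx = set0 \/ affine_2plane (V fc `&` Sx).
  move=> c0 n0; rewrite Hfc.
  have [[I1 hI1]|Zn] := pselect (exists I, Zs (soconj e) (soconj c) I).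
    right; apply: (zplane a _ _ (hcb c0) hI1).
      by move=> h; apply: c0; rewrite -(soconjK c) h soconj_z.
    by rewrite sonr_conj.
  left; apply: img0; apply/seteqP; split => I //= hI; apply: Zn; by exists I.
split.
  have [c0|c0] := pselect (c = sozero R).
    have [e0|e0] := pselect (e = sozero R).
      right; right; right; split.
        move=> y [I hI <-]; rewrite /V /= ev_f // e0 c0 somul0r soadd0l.
        by [].
      by move=> hnr; rewrite Hd ?hbnr // c0 soscale_z.
    left; rewrite /case1 Hf; apply: img0; apply/seteqP; split => I //= [hI].
    by rewrite c0 somul0r soadd0r.
  have hb := hcb c0; have hnr := hnreal hb.
  have [n0|n0] := pselect (sonr c = 0).
    have [[I0 hI0]|Zn] := pselect (exists I, Zs e c I).
      right; right; left; split => //.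
      - by rewrite Hf; apply: (zplane a _ _ hb hI0).
      - by rewrite Hd // => h; apply: c0; exact: (soscale_inj (invr_neq0 hb) h).
      - by rewrite Hd // son_real sonr_scale n0 mulr0 soreal0.
    left; rewrite /case1 Hf; apply: img0; apply/seteqP; split => I //= hI; apply: Zn; by exists I.
  have hn : sonr c != 0 by apply/eqP.
  have [[h1 h2]|hrs] := pselect (sonr e = sonr c /\ sps e c = 0).
    right; left; exists (sopt a b (Istar e c)); split => //.
    - rewrite Hf; have -> : Zs e c = [set Istar e c].
        apply/seteqP; split => I /=; first exact: Z_uniq hn.
        by move=> ->; exact: Z_suff.
      by rewrite image_set1.
    - rewrite Hd // son_real sonr_scale => /soreal_inj0 /eqP; rewrite mulf_eq0 (negbTE hn) orbF.
      by rewrite expf_eq0 /= invr_eq0 (negbTE hb).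
    - rewrite Hsv Hd // soinv_scale ?invr_neq0 // /x sore_sopt // /Istar somul_scaler.
      rewrite sopt_scale sub_real_scale; congr (soadd _ (soscale _ _)); field.
      by rewrite hb hn.
  left; rewrite /case1 Hf; apply: img0; apply/seteqP; split => I //= hI; apply: hrs.
  exact: Z_nec hI.
split.
  move=> h1; have Zf0 : Zs e c = set0 by move: h1; rewrite /case1 Hf; exact: image_set0_set0.
  have [[r1 r2]|hrs] := pselect (sonr e = sonr c /\ sps e c = 0).
    right; split; first exact: HN1.
    have [c0|c0] := pselect (c = sozero R).
      left; rewrite Hfc; apply: img0; apply/seteqP; split => I //= [hI].
      rewrite c0 soconj_z somul0r soadd0r => he.
      have e0 : e = sozero R by rewrite -(soconjK e) he soconj_z.
      have : Zs e c J by split => //; rewrite e0 c0 somul0r soadd0l.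
      by rewrite Zf0.
    have [n0|n0] := pselect (sonr c = 0); first exact: FCalt.
    have : Zs e c (Istar e c) by apply: Z_suff => //; apply/eqP.
    by rewrite Zf0.
  left; split; first exact: HN2.
  rewrite Hfc; apply: img0; apply/seteqP; split => I //= hI; apply: hrs; exact: ZfcN hI.
split.
  move=> y [hnr hVf hsd hy].
  have hb := hbnr hnr.
  have : (V f `&` Sx) y by rewrite hVf.
  rewrite Hf => -[I0 hI0 hI0y].
  have [r1 r2] := Z_nec hI0.
  split; first exact: HN1.
  have hn : sonr c != 0.
    by apply/eqP => n0; apply: hsd; rewrite Hd // son_real sonr_scale n0 mulr0 soreal0.
  have hnc : sonr (soconj c) != 0 by rewrite sonr_conj.
  rewrite Hfc; have -> : Zs (soconj e) (soconj c) = [set Istar (soconj e) (soconj c)].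
    apply/seteqP; split => I /=; first exact: Z_uniq hnc.
    by move=> ->; apply: Z_suff => //; rewrite ?sonr_conj ?sps_conj.
  rewrite image_set1; congr [set _].
  case: hI0 => hI0s hz; have Ee : e = soopp (somul I0 c) := sosub_eq hz.
  rewrite -hI0y Hd // soinv_scale ?invr_neq0 // (soconj_sopt _ _ hI0s).
  rewrite /Istar sonr_conj soconjK Ee (conj_opp_mul _ hI0s).
  rewrite !somul_scalel !somul_scaler ?somul_scalel !soscaleA conj_sandwich scale_add_real sopt_scale.
  congr (soadd (soreal _) (soscale _ _)); field; by rewrite hb hn.
split.
  move=> [hnr hpl hd0 hsd].
  have hb := hbnr hnr.
  have [p0 [u [v [_ Ep]]]] := hpl.
  have : (V f `&` Sx) p0.
    rewrite Ep; exists 0 => //; exists 0 => //; by rewrite !soscale0 soadd0l soadd0r.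
  rewrite Hf => -[I0 hI0 _].
  have [r1 r2] := Z_nec hI0.
  split; first exact: HN1.
  have c0 : c <> sozero R by move=> c0; apply: hd0; rewrite Hd // c0 soscale_z.
  apply: FCalt => //.
  move: hsd; rewrite Hd // son_real sonr_scale => /soreal_inj0 /eqP.
  by rewrite mulf_eq0 expf_eq0 /= invr_eq0 (negbTE hb) /= => /eqP.
move=> [hsub _].
have h1 := hsub x SxJ.
have h2 := hsub (sopt a b (soopp J)) (ex_intro2 _ _ (soopp J) (SA_opp hJ) erefl).
move: h1 h2; rewrite /V /= /x (ev_f _ hJ) (ev_f _ (SA_opp hJ)) somul_oppl.
move=> /sosub_eq h1 /sosub_eq; rewrite sooppK h1 => /esym h3.
have Jc0 : somul J c = sozero R by apply: soopp_eq0.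
have c0 : c = sozero R := sq_zero hJ Jc0.
have e0 : e = sozero R by rewrite h1 Jc0 soopp_z.
split.
  move=> y [I hI <-]; rewrite /V /= (ev_fc _ hI) e0 c0 soconj_z somul0r soadd0l.
  by [].
move=> y [I hI <-]; rewrite /V /= (ev_N _ hI) e0 c0 subrr sps_z soreal0 soscale0 soadd0l.
by [].
Qed.
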